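(* Let $L$ be a full intersection lattice such that $\hat 1\in\bullet(\mathrm{nti}(L))$, and let $T$ be a witnessing tree for this. Then $\mathrm{mult}_T(U)=-\mu_L(U,\hat 1)$ for every $U\in\mathrm{nti}(L)$.
   Context: A finite family $\mathcal{F}$ of sets is non-trivial if it is non-empty and no $X\in\mathcal{F}$ satisfies $X=\bigcup\mathcal{F}$. For such $\mathcal{F}$ and non-empty $\mathcal{T}\subseteq\mathcal{F}$, let $S_{\mathcal{T}}=\bigcap\mathcal{T}$, and let $S_\emptyset=\bigcup\mathcal{F}$. The intersection lattice of $\mathcal{F}$ is $\mathbb{L}_{\mathcal{F}}=(\{S_{\mathcal{T}}\mid\mathcal{T}\subseteq\mathcal{F}\},\subseteq)$, with greatest element $\hat 1=\bigcup\mathcal{F}$; an intersection lattice is one of this form. For $L=\mathbb{L}_{\mathcal{F}}$ and $x\in\hat 1$, let $\min_L(x)=S_{\{X\in\mathcal{F}\mid x\in X\}}$; $L$ is full if for every $U\in L$, $U\neq\hat 1$, there is $x\in\hat 1$ with $\min_L(x)=U$. The Möbius function of a finite poset $P$ is given for $x\le y$ by $\mu_P(y,y)=1$ and $\mu_P(x,y)=-\sum_{x<z\le y}\mu_P(z,y)$. Let $\mathrm{nti}(L)=\{U\in L\mid U\neq\hat 1\}$. For sets $A,B$, $A\,\dot\cup\,B=A\cup B$ is defined only when $A\cap B=\emptyset$, and $A\,\dot\setminus\,B=A\setminus B$ is defined only when $B\subseteq A$. For a finite family $\mathcal{G}$ of sets, $\bullet(\mathcal{G})$ is the smallest family of sets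 containing $\emptyset$ and every member of $\mathcal{G}$ and closed under well-defined disjoint unions and subset complements. A witnessing tree of $X\in\bullet(\mathcal{G})$ is a rooted ordered tree whose leaves are labelled by $\emptyset$ or by members of $\mathcal{G}$, and whose internal nodes are labelled $\dot\cup$ or $\dot\setminus$ ($\dot\setminus$-nodes being binary), such that evaluating each internal node as the corresponding operation on its children's values (in order) is always well defined and the root evaluates to $X$. For a leaf $\ell$ of $T$, its polarity $\mathrm{pol}_T(\ell)$ is $1$ if the path from the root to $\ell$ goes to the right (second) child of a $\dot\setminus$-node an even number of times, and $-1$ otherwise. For $U\in\mathcal{G}\cup\{\emptyset\}$, $\mathrm{mult}_T(U)=\sum_{\ell}\mathrm{pol}_T(\ell)$, the sum over leaves $\ell$ of $T$ labelled $U$. *)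

(* Defs.v *)
From HB Require Import structures.
From mathcomp Require Import all_boot all_order all_algebra.
From mathcomp Require Import boolp classical_sets.
Set Implicit Arguments. Unset Strict Implicit. Unset Printing Implicit Defensive.
Import Order.TTheory GRing.Theory Num.Theory.
Local Open Scope classical_set_scope.

(* A finite poset is given by the (duplicate-free) list P of its elements and
   its order relation le.  mobius_fuel implements the recursion
     mu(y,y) = 1,  mu(x,y) = - sum_{x < z <= y} mu(z,y);
   recursion depth size P suffices since strict chains have length < size P. *)
Fixpoint mobius_fuel (X : eqType) (P : seq X) (le : rel X) (k : nat) (x y : X)
  : int :=
  if x == y then 1%R else
  match k with
  | 0 => 0%R
  | k'.+1 => (- \sum_(z <- P | [&& le x z, z != x & le z y])
                 mobius_fuel P le k' z y)%R
  end.

Definition mobius (X : eqType) (P : seq X) (le : rel X) (x y : X) : int :=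
  mobius_fuel P le (size P) x y.

Section Family.
Variable T : Type.
Implicit Types (F G : seq (set T)) (A B U : set T).

Definition famU F : set T := [set x | exists2 X, X \in F & X x].
Definition famI F : set T := [set x | forall X, X \in F -> X x].

Definition nontrivial F : Prop :=
  F <> [::] /\ forall X, X \in F -> X <> famU F.

Definition S_of F (Tsub : seq (set T)) : set T :=
  if Tsub is [::] then famU F else famI Tsub.

Definition inL F U : Prop := exists m : bitseq, U = S_of F (mask m F).

Definition Lelems F : seq (set T) :=
  undup [seq S_of F (mask (m : (size F).-tuple bool) F) | m <- enum {: (size F).-tuple bool}].

Definition subset_rel : rel (set T) := fun A B => `[< A `<=` B >].

Definition muL F (U V : set T) : int := mobius (Lelems F) subset_rel U V.

Definition ntiL F U : Prop := inL F U /\ U <> famU F.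

Definition minL F (x : T) : set T := S_of F [seq X <- F | `[< X x >]].

Definition full_lattice F : Prop :=
  forall U, ntiL F U -> exists2 x, famU F x & minL F x = U.

Inductive bullet (G : set T -> Prop) : set T -> Prop :=
| bullet0 : bullet G set0
| bulletG A : G A -> bullet G A
| bulletU A B : bullet G A -> bullet G B -> A `&` B = set0 -> bullet G (A `|` B)
| bulletD A B : bullet G A -> bullet G B -> B `<=` A -> bullet G (A `\` B).

End Family.

(* rooted ordered trees: leaves carry a set label; internal nodes are
   disjoint-union nodes (with an ordered list of children) or binary
   subset-complement nodes (left child \ right child). *)
Inductive wtree (T : Type) :=
| Leaf of set T
| DUnion of seq (wtree T)
| DDiff of wtree T & wtree T.
Arguments Leaf {T}. Arguments DUnion {T}. Arguments DDiff {T}.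

Section Trees.
Variable T : Type.

Definition pw_disjoint (l : seq (set T)) : Prop :=
  forall i j, (i < j < size l)%N -> nth set0 l i `&` nth set0 l j = set0.

(* value of a tree (meaningful when the evaluation is well defined) *)
Fixpoint tval (t : wtree T) : set T :=
  match t with
  | Leaf A => A
  | DUnion ts => \big[setU/set0]_(s <- map tval ts) s
  | DDiff a b => tval a `\` tval b
  end.

Fixpoint twf (G : set T -> Prop) (t : wtree T) : Prop :=
  match t with
  | Leaf A => A = set0 \/ G A
  | DUnion ts => ts <> [::] /\ pw_disjoint (map tval ts) /\
                 (fix all_wf (l : seq (wtree T)) : Prop :=
                    match l with [::] => True | u :: l' => twf G u /\ all_wf l' end) ts
  | DDiff a b => twf G a /\ twf G b /\ tval b `<=` tval a
  end.

Definition witnessing (G : set T -> Prop) (t : wtree T) (X : set T) : Prop :=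
  twf G t /\ tval t = X.

Fixpoint leaves_pol (t : wtree T) : seq (set T * int) :=
  match t with
  | Leaf A => [:: (A, 1%R)]
  | DUnion ts => flatten (map leaves_pol ts)
  | DDiff a b => leaves_pol a ++ [seq (p.1, (- p.2)%R) | p <- leaves_pol b]
  end.

Definition multT (t : wtree T) (U : set T) : int :=
  (\sum_(p <- leaves_pol t | p.1 == U) p.2)%R.

End Trees.

(* Main.v *)
Require Import Defs.
From HB Require Import structures.
From mathcomp Require Import all_boot all_order all_algebra.
From mathcomp Require Import boolp classical_sets.
From mathcomp Require Import zify.
Import Defs.
Set Implicit Arguments. Unset Strict Implicit. Unset Printing Implicit Defensive.
Import Order.TTheory GRing.Theory Num.Theory.
Local Open Scope classical_set_scope.
Local Open Scope ring_scope.

Section Aux.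
Variable T : Type.
Implicit Types (A B : set T) (F : seq (set T)).

Definition ind A (x : T) : int := if `[< A x >] then 1 else 0.

Lemma ind0 x : ind set0 x = 0.
Proof. by rewrite /ind; case: asboolP. Qed.

Lemma indU A B x : A `&` B = set0 -> ind (A `|` B) x = ind A x + ind B x.
Proof.
move=> H; rewrite /ind.
case: (asboolP ((A `|` B) x)) => hAB; case: (asboolP (A x)) => hA;
  case: (asboolP (B x)) => hB //.
- have : (A `&` B) x by [].
  by rewrite H.
- by case: hAB => [|].
- by case: hAB; left.
- by case: hAB; left.
- by case: hAB; right.
Qed.

Lemma indD A B x : B `<=` A -> ind (A `\` B) x = ind A x - ind B x.
Proof.
move=> H; rewrite /ind.
case: (asboolP ((A `\` B) x)) => hAB; case: (asboolP (A x)) => hA;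
  case: (asboolP (B x)) => hB //.
- by case: hAB => _ /(_ hB).
- by case: hAB => /hA.
- by case: hAB => /hA.
- by case: hAB.
- by case: hA; apply: H.
Qed.

Fixpoint allwf (G : set T -> Prop) (l : seq (wtree T)) : Prop :=
  match l with [::] => True | u :: l' => twf G u /\ allwf G l' end.

Section Ind.
Variables (P : wtree T -> Prop) (Q : seq (wtree T) -> Prop).
Hypotheses (HL : forall A, P (Leaf A)) (HU : forall ts, Q ts -> P (DUnion ts))
  (HD : forall a b, P a -> P b -> P (DDiff a b)) (Qnil : Q [::])
  (Qcons : forall t l, P t -> Q l -> Q (t :: l)).
Fixpoint wt_ind t : P t :=
  match t with
  | Leaf A => HL A
  | DUnion ts => HU ((fix go l : Q l := match l with [::] => Qnil | u :: l' => Qcons (wt_ind u) (go l') end) ts)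
  | DDiff a b => HD (wt_ind a) (wt_ind b)
  end.
End Ind.

Lemma bigU_mem (l : seq (set T)) x :
  (\big[setU/set0]_(s <- l) s) x -> exists2 i, (i < size l)%N & nth set0 l i x.
Proof.
elim: l => [|a l IH]; first by rewrite big_nil.
rewrite big_cons => -[ha|/IH [i hi hx]]; first by exists 0%N.
by exists i.+1.
Qed.

Lemma ind_tree (G : set T -> Prop) (x : T) (t : wtree T) : twf G t ->
  ind (tval t) x = \sum_(p <- leaves_pol t) p.2 * ind p.1 x.
Proof.
pose Q l := allwf G l -> pw_disjoint (map (@tval T) l) ->
  ind (\big[setU/set0]_(s <- map (@tval T) l) s) x =
  \sum_(p <- flatten (map (@leaves_pol T) l)) p.2 * ind p.1 x.
move: t; apply: (@wt_ind _ Q).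
- by move=> A _ /=; rewrite big_cons big_nil mul1r addr0.
- move=> ts hQ /= [_ [hd ha]]; rewrite /Q in hQ; apply: hQ hd; by move: ha; clear; elim: ts => //= u l IH [h1 h2]; split => //; exact: IH.
- move=> a b IHa IHb /= [ha [hb hs]].
  rewrite indD // IHa // IHb // big_cat big_map /=.
  congr (_ + _); rewrite -sumrN; apply: eq_bigr => p _; by rewrite mulNr.
- by move=> _ _; rewrite !big_nil ind0.
- move=> u l IHu IHl [hu hl] hd /=.
  rewrite big_cons big_cat /= -IHu // -IHl //.
  + apply: indU; rewrite eqEsubset; split => // y [hy /bigU_mem [i hi hyi]].
    have := hd 0%N i.+1; rewrite /= ltnS hi => /(_ isT) /= E.
    have : (tval u `&` nth set0 (map (@tval T) l) i) y by [].
    by rewrite E.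
  + move=> i j hij; have := hd i.+1 j.+1; rewrite /=. apply. done.
Qed.

Lemma labels_tree (G : set T -> Prop) (t : wtree T) : twf G t ->
  forall p, p \in leaves_pol t -> p.1 = set0 \/ G p.1.
Proof.
pose Q l := allwf G l -> forall p, p \in flatten (map (@leaves_pol T) l) -> p.1 = set0 \/ G p.1.
move: t; apply: (@wt_ind _ Q).
- by move=> A hA p /=; rewrite inE => /eqP ->.
- move=> ts hQ /= [_ [hd ha]]; rewrite /Q in hQ; apply: hQ; by move: ha; clear; elim: ts => //= u l IH [h1 h2]; split => //; exact: IH.
- move=> a b IHa IHb /= [ha [hb hs]] p; rewrite mem_cat => /orP[/IHa|/mapP[q /IHb hq ->]]; by auto.
- by [].
- move=> u l IHu IHl [hu hl] p /=; rewrite mem_cat => /orP[/IHu|/IHl]; by auto.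
Qed.


Lemma sum_pred1 (X : eqType) (r : seq X) (i : X) (c : int) :
  uniq r -> i \in r -> \sum_(j <- r) (if j == i then c else 0) = c.
Proof.
move=> hu hi; rewrite (bigD1_seq i) //= eqxx big1 ?addr0 // => j /negbTE -> //.
Qed.

Lemma regroup (s : seq (set T * int)) (Ps : seq (set T)) (x : T) : uniq Ps ->
  (forall p, p \in s -> p.1 \in Ps \/ ind p.1 x = 0) ->
  \sum_(p <- s) p.2 * ind p.1 x =
  \sum_(W <- Ps) (\sum_(p <- s | p.1 == W) p.2) * ind W x.
Proof.
move=> hu; elim: s => [|a s IH] hs.
  by rewrite big_nil big1 // => W _; rewrite big_nil mul0r.
rewrite big_cons IH; last by move=> p hp; apply: hs; rewrite inE hp orbT.
rewrite [RHS](eq_bigr (fun W => (if W == a.1 then a.2 * ind a.1 x else 0) +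
   (\sum_(p <- s | p.1 == W) p.2) * ind W x)); last first.
  move=> W _; rewrite big_cons eq_sym; case: eqP => [->|_] //.
  by rewrite mulrDl. by rewrite add0r.
rewrite big_split /=; congr (_ + _).
have [ha|ha] := hs a (mem_head _ _); first by rewrite sum_pred1.
by rewrite ha mulr0 big1 // => W _; case: ifP.
Qed.

End Aux.

Fixpoint padm (m : bitseq) (n : nat) : bitseq :=
  match n with 0 => [::] | n'.+1 => head false m :: padm (behead m) n' end.

Lemma padm_size m n : size (padm m n) == n.
Proof. by elim: n m => //= n IH m; rewrite eqSS IH. Qed.

Lemma mask_padm (X : Type) (s : seq X) m : mask (padm m (size s)) s = mask m s.
Proof.
by elim: s m => [|a s IH] [|b m] //=; rewrite IH.
Qed.

Section Lat.
Variables (T : Type) (F : seq (set T)).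

Lemma S_ofE l z : S_of F l z <-> (if l is [::] then famU F z else forall X, X \in l -> X z).
Proof. by case: l. Qed.

Lemma S_of_sub l : (forall X, X \in l -> X \in F) -> S_of F l `<=` famU F.
Proof.
case: l => [|X l] /= hl z hz; first by []. exists X; first by apply: hl; rewrite mem_head.
by apply: hz; rewrite mem_head.
Qed.

Lemma Lelems_mem z : z \in Lelems F -> exists m : bitseq, z = S_of F (mask m F).
Proof. by rewrite mem_undup => /mapP [m _ ->]; exists (val m). Qed.

Lemma Lelems_sub z : z \in Lelems F -> z `<=` famU F.
Proof.
by case/Lelems_mem => m ->; apply: S_of_sub => X; apply: mem_mask.
Qed.

Lemma inL_mem U : inL F U -> U \in Lelems F.
Proof.
case=> m ->; rewrite mem_undup; apply/mapP.
exists (Tuple (padm_size m (size F))); first by rewrite mem_enum.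
by rewrite /= mask_padm.
Qed.

Lemma top_mem : famU F \in Lelems F.
Proof. by apply: inL_mem; exists [::]. Qed.

Lemma minL_in x : famU F x -> minL F x x.
Proof.
rewrite /minL; case E: [seq X <- F | `[< X x >]] => [|Y l] //= _ X.
by rewrite -E mem_filter => /andP [/asboolP].
Qed.

Lemma ind_min x V U : famU F x -> minL F x = V -> U \in Lelems F ->
  ind U x = if subset_rel V U then 1 else 0.
Proof.
move=> hx hV /Lelems_mem [m ->].
have hl : forall X, X \in mask m F -> X \in F by move=> X; apply: mem_mask.
move: (mask m F) hl => l hl.
have hxV : V x by rewrite -hV; apply: minL_in.
rewrite /ind; case: (asboolP (S_of F l x)) => hU.
- suff -> : subset_rel V (S_of F l) by [].
  apply/asboolP => z hz.
  case: l hU hl => [|X l].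
    by move=> _ _; rewrite -hV in hz; apply: (S_of_sub _ hz) => Y; rewrite mem_filter => /andP[].
  move=> hU hl Y hY; move: hz; rewrite -hV /minL.
  have hYF : Y \in F by apply: hl.
  have hYx : Y x by apply: hU.
  have hYf : Y \in [seq X <- F | `[< X x >]] by rewrite mem_filter hYF andbT; apply/asboolP.
  case: [seq X <- F | `[< X x >]] hYf => [|W l'] //= hYf hz.
  by apply: hz.
- rewrite /subset_rel; case: (asboolP (V `<=` S_of F l)) => // hs.
  by case: hU; apply: hs.
Qed.

End Lat.

Lemma count_le (X : eqType) (a b : pred X) s :
  (forall u, a u -> b u) -> (count a s <= count b s)%N.
Proof.
move=> hab; elim: s => //= u s IH.
case ha: (a u); first by rewrite (hab _ ha) /=; lia.
case: (b u) => /=; lia.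
Qed.

Lemma count_lt (X : eqType) (a b : pred X) s w :
  (forall u, a u -> b u) -> w \in s -> b w -> ~~ a w -> (count a s < count b s)%N.
Proof.
move=> hab; elim: s => //= u s IH; rewrite inE => /orP[/eqP <-|hw] hb ha.
  rewrite hb (negbTE ha) /=; have := count_le s hab; lia.
have := IH hw hb ha.
case ha': (a u); first by rewrite (hab _ ha') /=; lia.
case: (b u) => /=; lia.
Qed.

Theorem proposition4p7 (T : Type) (F : seq (set T)) :
  nontrivial F -> full_lattice F ->
  bullet (ntiL F) (famU F) ->
  forall t : wtree T, witnessing (ntiL F) t (famU F) ->
  forall U : set T, ntiL F U -> multT t U = (- muL F U (famU F))%R.
Proof.
move=> _ hfull _ t [htw htv] U hU.
set y := famU F. set P := Lelems F. set m := multT t.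
have [x0 hx0 _] := hfull U hU.
have huP : uniq P by apply: undup_uniq.
have my0 : m y = 0.
  rewrite /m /multT; apply: big1_seq => p /andP [/eqP hp hin].
  case: (labels_tree htw hin) => [h|[_ h]]; last by case: h.
  by move: hx0; rewrite -/y -hp h.
have key : forall V, V \in P -> V != y -> \sum_(W <- P | subset_rel V W) m W = 1.
  move=> V hV hne.
  have hVn : ntiL F V.
    split; first by case: (Lelems_mem hV) => mm ->; exists mm.
    by move/eqP: hne.
  have [x hx hmin] := hfull V hVn.
  have h1 := ind_tree x htw; rewrite htv in h1.
  have e1 : ind (famU F) x = 1 by rewrite /ind; case: asboolP.
  rewrite -e1 h1 (@regroup _ _ P) //; last first.
    move=> p hp; case: (labels_tree htw hp) => [->|hn]; first by right; apply: ind0.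
    by left; apply: inL_mem; case: hn.
  rewrite big_mkcond [RHS]big_seq [LHS]big_seq; apply: eq_bigr => W hW.
  rewrite (ind_min hx hmin hW); case: ifP => _; by rewrite ?mulr1 ?mulr0.
pose g W := if W == y then 1 else - m W.
have gkey : forall V, V \in P -> V != y -> \sum_(W <- P | subset_rel V W) g W = 0.
  move=> V hV hne.
  rewrite (eq_bigr (fun W => (W == y)%:R - m W)); last first.
    by move=> W _; rewrite /g; case: eqP => [->|_]; rewrite ?my0 ?subr0 ?sub0r.
  rewrite sumrB key //.
  suff -> : \sum_(W <- P | subset_rel V W) ((W == y)%:R : int) = 1 by rewrite subrr.
  rewrite big_mkcond big_seq (eq_bigr (fun W => if W == y then 1 else 0)).
    by rewrite -big_seq sum_pred1 // top_mem.
  move=> W hW; case: eqP => [->|_]; last by case: ifP.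
  suff -> : subset_rel V y by [].
  by apply/asboolP; apply: Lelems_sub.
have mob : forall k V, V \in P ->
    (count (fun W => subset_rel V W && (W != V)) P <= k)%N ->
    mobius_fuel P (@subset_rel T) k V y = g V.
  elim=> [|k IH] V hV hc /=.
    case: eqP => [->|hne]; first by rewrite /g eqxx.
    have : (0 < count (fun W => subset_rel V W && (W != V)) P)%N.
      rewrite -has_count; apply/hasP; exists y; first by apply: top_mem.
      rewrite eq_sym; apply/andP; split; last by apply/eqP.
      by apply/asboolP; apply: Lelems_sub.
    lia.
  case: eqP => [->|hne]; first by rewrite /g eqxx.
  rewrite big_seq_cond (eq_bigr g); last first.
    move=> z /andP [hz /and3P [hVz hzV hzy]]; apply: IH => //.
    rewrite -ltnS; apply: leq_trans hc; apply: (count_lt (w := z)) => //.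
    - move=> W /andP [hzW hWz]; apply/andP; split.
        apply/asboolP => u hu; move/asboolP: hzW; apply; by move/asboolP: hVz; apply.
      apply/eqP => hWV; move/eqP: hWz; apply.
      rewrite eqEsubset; split; last by move/asboolP: hzW.
      by rewrite hWV; move/asboolP: hVz.
    - by rewrite hzV andbT.
    - by rewrite eqxx andbF.
  rewrite (eq_bigl (fun z => (z \in P) && (subset_rel V z && (z != V)))); last first.
    move=> z; case hz: (z \in P) => //=.
    suff -> : subset_rel z y by rewrite andbT.
    by apply/asboolP; apply: Lelems_sub.
  rewrite -big_seq_cond.
  have := gkey V hV (introN eqP hne).
  rewrite (bigID (fun z => z == V)) /=.
  have -> : \sum_(i <- P | subset_rel V i && (i == V)) g i = g V.
    rewrite big_mkcond (eq_bigr (fun z => if z == V then g V else 0)).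
      by rewrite sum_pred1.
    move=> z _; case: eqP => [->|_]; last by rewrite andbF.
    suff -> : subset_rel V V by [].
    by apply/asboolP.
  by move/eqP; rewrite addr_eq0 => /eqP ->.
rewrite /muL /mobius mob //; first last.
- by apply: count_size.
- by apply: inL_mem; case: hU.
rewrite /g; case: eqP => [hUy|_]; last by rewrite opprK.
by case: hU => _; rewrite hUy.
Qed.
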